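(* (Quantum Efron–Stein decomposition.) Let $\varrho=\rho_1\otimes\cdots\otimes\rho_n$ be a product state on $\mathcal K=\bigotimes_{i=1}^n\mathcal H_i$ (finite-dimensional Hilbert spaces). Then any observable $X$ on $\mathcal K$ has a unique decomposition $X=\sum_{J\subseteq[n]}X^{=J}$ into observables $X^{=J}$ such that: (1) $X^{=J}$ acts nontrivially only on the subsystems in $J$; (2) $\mathcal E_jX^{=J}=0$ for all $j\in J$. Moreover: (3) for every $J$, the map $X\mapsto X^{=J}$ is linear and $\sum_{I\subseteq J}X^{=I}=\mathcal E_{\overline J}X$; (4) for $I\ne J$, $\langle X^{=I},X^{=J}\rangle_\varrho=0$.
   Context: For $i\in[n]$, $\mathcal E_iY=\mathrm{Tr}_i[(\rho_i\otimes I)Y]$, regarded as an operator on $\mathcal K$ by tensoring with the identity on $\mathcal H_i$; for $I\subseteq[n]$, $\mathcal E_I=\prod_{i\in I}\mathcal E_i$ (these maps commute; $\mathcal E_\emptyset$ is the identity map), and $\overline J=[n]\setminus J$. ''Acts nontrivially only on the subsystems in $J$'' means the operator is of the form $Y\otimes I_{\overline J}$ with $Y$ acting on $\bigotimes_{j\in J}\mathcal H_j$. The inner product is $\langle Y,Z\rangle_\varrho=\mathrm{Tr}[\varrho Y^\dagger Z]$. *)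

(* Defs.v *)
(* Operators on K = (x)_i H_i are represented by their
   matrix entries in the product computational basis. *)
From HB Require Import structures.
From mathcomp Require Import all_boot all_order all_algebra.
Set Implicit Arguments. Unset Strict Implicit. Unset Printing Implicit Defensive.
Import Order.TTheory GRing.Theory Num.Theory.
Local Open Scope ring_scope.

Section QES.
Variables (C : numClosedFieldType) (n : nat) (d : 'I_n -> nat).

(* basis index of K = H_1 (x) ... (x) H_n, with dim H_i = d i *)
Definition idx : finType := {dffun forall i : 'I_n, 'I_(d i)}.

(* operators on K: entries X (a, b) = <a| X |b> *)
Local Notation op := {ffun idx * idx -> C}.

(* basis index of (x)_{j in J} H_j *)
Definition idxJ (J : {set 'I_n}) : finType :=
  {dffun forall j : {i : 'I_n | i \in J}, 'I_(d (val j))}.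

Definition resJ (J : {set 'I_n}) (a : idx) : idxJ J :=
  [ffun j : {i : 'I_n | i \in J} => a (val j)].

(* X = Y (x) I_{complement of J} for some operator Y on (x)_{j in J} H_j *)
Definition acts_only_on (J : {set 'I_n}) (X : op) : Prop :=
  exists Y : idxJ J -> idxJ J -> C,
    forall a b : idx,
      X (a, b) = Y (resJ J a) (resJ J b) *
                 (if [forall i, (i \notin J) ==> (a i == b i)] then 1 else 0).

Definition observable (X : op) : Prop :=
  forall a b : idx, X (b, a) = (X (a, b))^*.

Definition is_state (m : nat) (r : 'M[C]_m) : Prop :=
  (forall s t, r t s = (r s t)^*) /\
  (forall v : 'I_m -> C, 0 <= \sum_(s < m) \sum_(t < m) (v s)^* * r s t * v t) /\
  \tr r = 1.

Variable rho : forall i : 'I_n, 'M[C]_(d i).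

Definition agree_off (i : 'I_n) (a a' : idx) : bool :=
  [forall k, (k != i) ==> (a k == a' k)].

(* E_i Y = Tr_i[(rho_i (x) I) Y] (x) I_{H_i}, written entrywise:
   (E_i Y)(a,b) = [a_i = b_i] sum_{s,t} rho_i(s,t) Y(a[i:=t], b[i:=s]) *)
Definition Ei (i : 'I_n) (Y : op) : op :=
  [ffun ab : idx * idx =>
     if ab.1 i == ab.2 i then
       \sum_(a' : idx | agree_off i ab.1 a')
        \sum_(b' : idx | agree_off i ab.2 b') rho i (b' i) (a' i) * Y (a', b')
     else 0].

Definition EI (I : {set 'I_n}) (Y : op) : op := foldr Ei Y (enum I).

Definition varrho (a b : idx) : C := \prod_(i < n) rho i (a i) (b i).

(* <Y, Z>_varrho = Tr[varrho Y^dagger Z] *)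
Definition inner (Y Z : op) : C :=
  \sum_(a : idx) \sum_(b : idx) \sum_(c : idx) varrho a b * (Y (c, b))^* * Z (c, a).

Definition ES_decomp (X : op) (F : {set 'I_n} -> op) : Prop :=
  (forall J, observable (F J)) /\
  X = \sum_(J : {set 'I_n}) F J /\
  (forall J, acts_only_on J (F J)) /\
  (forall (J : {set 'I_n}) j, j \in J -> Ei j (F J) = 0).

End QES.

Notation op C d := {ffun idx d * idx d -> C}.

(* Main.v *)
Require Import Defs.
From HB Require Import structures.
From mathcomp Require Import all_boot all_order all_algebra.
Unset Printing Implicit Defensive.
Import Order.TTheory GRing.Theory Num.Theory.
Local Open Scope ring_scope.

Section QESProof.
Variables (C : numClosedFieldType) (n : nat) (d : 'I_n -> nat).
Variable rho : forall i : 'I_n, 'M[C]_(d i).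
Hypothesis Hrho : forall i, is_state (rho i).

Local Notation idx := (idx d).
Local Notation op := (op C d).

Definition upd (a : idx) (j : 'I_n) (t : 'I_(d j)) : idx :=
  @finfun _ (fun i => 'I_(d i)) (fun i =>
    match @eqP _ i j with
    | ReflectT H => cast_ord (congr1 d (esym H)) t
    | ReflectF _ => a i end).

Lemma upd_same a j t : upd a j t j = t.
Proof. rewrite /upd ffunE; case: eqP => // H; exact/val_inj. Qed.

Lemma upd_other a j t i : i != j -> upd a j t i = a i.
Proof. by move=> /negbTE ij; rewrite /upd ffunE; case: eqP => // H; rewrite H eqxx in ij. Qed.

Lemma updK a j s t : upd (upd a j s) j t = upd a j t.
Proof.
apply/ffunP => i; case: (eqVneq i j) => [->|ij]; first by rewrite !upd_same.
by rewrite !upd_other.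
Qed.

Lemma upd_id a j : upd a j (a j) = a.
Proof.
apply/ffunP => i; case: (eqVneq i j) => [->|ij]; first by rewrite !upd_same.
by rewrite !upd_other.
Qed.

Lemma updC a i j s t : i != j -> upd (upd a i s) j t = upd (upd a j t) i s.
Proof.
move=> ij; apply/ffunP => k.
case: (eqVneq k j) => [->|kj].
  by rewrite upd_same upd_other 1?eq_sym // upd_same.
case: (eqVneq k i) => [->|ki]; first by rewrite upd_other // !upd_same.
by rewrite !upd_other.
Qed.

Lemma upd_inj a j : injective (upd a j).
Proof. by move=> s t /(congr1 (fun x : idx => x j)); rewrite !upd_same. Qed.

Lemma agree_offP i a a' : agree_off i a a' = (a' == upd a i (a' i)).
Proof.
apply/forallP/eqP => [H|->].
  apply/ffunP => k; case: (eqVneq k i) => [->|ki]; first by rewrite upd_same.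
  by rewrite upd_other //; have /implyP/(_ ki)/eqP := H k.
move=> k; apply/implyP => ki; by rewrite upd_other.
Qed.

Lemma sum_agree (V : nmodType) i a (g : idx -> V) :
  \sum_(a' | agree_off i a a') g a' = \sum_(s : 'I_(d i)) g (upd a i s).
Proof.
rewrite (reindex_onto (upd a i) (fun a' : idx => a' i)); last first.
  by move=> a'; rewrite agree_offP => /eqP <-.
apply: eq_bigl => s; rewrite upd_same eqxx andbT agree_offP upd_same eqxx.

by [].
Qed.

Lemma EiE i (Y : op) a b :
  Ei rho i Y (a, b) = if a i == b i then
    \sum_(s : 'I_(d i)) \sum_(t : 'I_(d i)) rho i t s * Y (upd a i s, upd b i t) else 0.
Proof.
rewrite /Ei ffunE /=; case: ifP => // _.
rewrite sum_agree; apply: eq_bigr => s _; rewrite sum_agree.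
by apply: eq_bigr => t _; rewrite !upd_same.
Qed.

Lemma sum_split (V : nmodType) j (t0 : 'I_(d j)) (f : idx -> V) :
  \sum_(a : idx) f a = \sum_(a : idx | a j == t0) \sum_(t : 'I_(d j)) f (upd a j t).
Proof.
rewrite (partition_big (fun a => upd a j t0) (fun a : idx => a j == t0)); last first.
  by move=> a _; rewrite upd_same.
apply: eq_bigr => a /eqP at0.
rewrite (reindex_onto (upd a j) (fun a' : idx => a' j)); last first.
  by move=> a' /eqP <-; rewrite updK upd_id.
apply: eq_bigl => t; rewrite updK -at0 upd_id upd_same !eqxx.
done.
Qed.


Lemma sum_delta m (f : 'I_m -> C) s :
  \sum_(t < m) (if s == t then f t else 0) = f s.
Proof. by rewrite -big_mkcond /=; under eq_bigl do rewrite eq_sym; exact: big_pred1_eq. Qed.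

Definition sc (c : C) (Y : op) : op := [ffun ab => c * Y ab].

Lemma opD (Y Z : op) x : (Y + Z) x = Y x + Z x.
Proof. by rewrite ffunE. Qed.
Lemma scE c (Y : op) x : sc c Y x = c * Y x.
Proof. by rewrite ffunE. Qed.
Lemma op0 x : (0 : op) x = 0.
Proof. by rewrite ffunE. Qed.

Lemma EiZD i (c : C) (Y Z : op) : Ei rho i (sc c Y + Z) = sc c (Ei rho i Y) + Ei rho i Z.
Proof.
apply/ffunP => [[a b]]; rewrite opD scE !EiE; case: ifP => _; last by rewrite mulr0 addr0.
rewrite mulr_sumr -big_split; apply: eq_bigr => s _.
rewrite mulr_sumr -big_split; apply: eq_bigr => t _.
by rewrite opD scE mulrDr mulrCA.
Qed.

Lemma Ei0 i : Ei rho i 0 = 0.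
Proof.
apply/ffunP => [[a b]]; rewrite EiE op0; case: ifP => // _.
by rewrite big1 // => s _; rewrite big1 // => t _; rewrite op0 mulr0.
Qed.

Lemma EiD i (Y Z : op) : Ei rho i (Y + Z) = Ei rho i Y + Ei rho i Z.
Proof.
have sc1 : forall Y, sc 1 Y = Y by move=> W; apply/ffunP => x; rewrite scE mul1r.
by have := EiZD i 1 Y Z; rewrite !sc1.
Qed.

Lemma EiZ i c (Y : op) : Ei rho i (sc c Y) = sc c (Ei rho i Y).
Proof. by have := EiZD i c Y 0; rewrite addr0 Ei0 addr0. Qed.

Lemma Ei_sum i (I : Type) (r : seq I) (P : pred I) (F : I -> op) :
  Ei rho i (\sum_(k <- r | P k) F k) = \sum_(k <- r | P k) Ei rho i (F k).
Proof.
elim/big_rec2: _ => [|k y1 y2 _ <-]; first exact: Ei0.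
exact: EiD.
Qed.

Lemma EiEE i j (Y : op) a b : i != j ->
  Ei rho i (Ei rho j Y) (a, b) =
  (a i == b i)%:R * (a j == b j)%:R *
  \sum_(p : 'I_(d i) * 'I_(d i)) \sum_(q : 'I_(d j) * 'I_(d j))
     rho i p.2 p.1 * rho j q.2 q.1 * Y (upd (upd a i p.1) j q.1, upd (upd b i p.2) j q.2).
Proof.
move=> ij; have ji : j != i by rewrite eq_sym.
rewrite EiE; under eq_bigr => s _ do under eq_bigr => t _ do rewrite EiE !upd_other //.
case: (a i == b i); last by rewrite !mul0r.
case: (a j == b j); last first.
  rewrite !mulr0 !mul0r big1 // => s _; rewrite big1 // => t _; exact: mulr0.
rewrite !mul1r pair_big /=; apply: eq_bigr => p _.
rewrite pair_big mulr_sumr /=; apply: eq_bigr => q _.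
by rewrite mulrA.
Qed.

Lemma Ei_comm i j (Y : op) : Ei rho i (Ei rho j Y) = Ei rho j (Ei rho i Y).
Proof.
case: (eqVneq i j) => [->//|ij].
apply/ffunP => [[a b]]; rewrite EiEE // EiEE 1?eq_sym //.
rewrite [X in X * _ = _]mulrC exchange_big /=; congr (_ * _).
apply: eq_bigr => q _; apply: eq_bigr => p _.
by rewrite updC // [upd (upd b _ _) _ _]updC // [rho i _ _ * _]mulrC.
Qed.

Lemma tr1 i : \sum_(s < d i) rho i s s = 1.
Proof. by have [_ [_ <-]] := Hrho i; rewrite /mxtrace. Qed.

Lemma trK i (K : C) :
  \sum_(s < d i) \sum_(t < d i) rho i t s * ((s == t)%:R * K) = K.
Proof.
transitivity (\sum_(s < d i) rho i s s * K); last by rewrite -big_distrl /= tr1 mul1r.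
apply: eq_bigr => s _.
rewrite -(sum_delta _ (fun t => rho i t s * K) s); apply: eq_bigr => t _.
by case: (s == t); rewrite /= ?mul1r ?mul0r ?mulr0.
Qed.

Definition EiG i (Y : op) a b :=
  \sum_(s : 'I_(d i)) \sum_(t : 'I_(d i)) rho i t s * Y (upd a i s, upd b i t).

Lemma EiE2 i Y a b : Ei rho i Y (a, b) = (a i == b i)%:R * EiG i Y a b.
Proof. by rewrite EiE; case: ifP => _; rewrite ?mul1r ?mul0r. Qed.

Lemma EiG_upd i Y a b s t : EiG i Y (upd a i s) (upd b i t) = EiG i Y a b.
Proof. by apply: eq_bigr => s' _; apply: eq_bigr => t' _; rewrite !updK. Qed.

Definition triv i (Z : op) := exists G : idx -> idx -> C,
  (forall a b s t, G (upd a i s) (upd b i t) = G a b) /\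
  (forall a b, Z (a, b) = (a i == b i)%:R * G a b).

Lemma triv_Ei i Y : triv i (Ei rho i Y).
Proof. exists (EiG i Y); split; [exact: EiG_upd | exact: EiE2]. Qed.

Lemma Ei_triv i Z : triv i Z -> Ei rho i Z = Z.
Proof.
move=> [G [GU ZE]]; apply/ffunP => [[a b]]; rewrite EiE2 ZE; congr (_ * _).
rewrite /EiG -[RHS](trK i); apply: eq_bigr => s _; apply: eq_bigr => t _.
by rewrite ZE !upd_same GU.
Qed.

Lemma Ei_idem i (Y : op) : Ei rho i (Ei rho i Y) = Ei rho i Y.
Proof. exact/Ei_triv/triv_Ei. Qed.

Lemma triv_Ei_pres i j Z : i != j -> triv i Z -> triv i (Ei rho j Z).
Proof.
move=> ij [G [GU ZE]]; have ji : j != i by rewrite eq_sym.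
exists (fun a b : idx => (a j == b j)%:R * \sum_(s : 'I_(d j)) \sum_(t : 'I_(d j))
                     rho j t s * G (upd a j s) (upd b j t)); split.
  move=> a b s t; rewrite !upd_other //; congr (_ * _).
  apply: eq_bigr => s' _; apply: eq_bigr => t' _.
  by rewrite (updC a) // (updC b) // GU.
move=> a b; rewrite EiE2 /EiG mulrCA; congr (_ * _); rewrite mulr_sumr.
apply: eq_bigr => s _; rewrite mulr_sumr; apply: eq_bigr => t _.
by rewrite ZE !upd_other // mulrCA.
Qed.

Lemma triv0 i : triv i 0.
Proof. exists (fun _ _ => 0); split => // a b; by rewrite op0 mulr0. Qed.

Lemma trivZD i c Y Z : triv i Y -> triv i Z -> triv i (sc c Y + Z).
Proof.
move=> [G [GU YE]] [H [HU ZE]].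
exists (fun a b => c * G a b + H a b); split.
  by move=> a b s t; rewrite GU HU.
by move=> a b; rewrite opD scE YE ZE mulrDr mulrCA.
Qed.

Lemma triv_sum i (I : Type) (r : seq I) (P : pred I) (F : I -> op) :
  (forall k, P k -> triv i (F k)) -> triv i (\sum_(k <- r | P k) F k).
Proof.
move=> H; elim/big_rec: _ => [|k y Pk ty]; first exact: triv0.
have -> : F k + y = sc 1 (F k) + y by congr (_ + _); apply/ffunP => x; rewrite scE mul1r.
by apply: trivZD => //; apply: H.
Qed.


Local Notation fE := (foldr (Ei rho)).

Lemma fE_ZD (s : seq 'I_n) c (Y Z : op) : fE (sc c Y + Z) s = sc c (fE Y s) + fE Z s.
Proof. by elim: s => [|k s IH] //=; rewrite IH EiZD. Qed.

Lemma fE_0 (s : seq 'I_n) : fE 0 s = 0.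
Proof. by elim: s => [|k s IH] //=; rewrite IH Ei0. Qed.

Lemma fE_sum (s : seq 'I_n) (I : Type) (r : seq I) (P : pred I) (F : I -> op) :
  fE (\sum_(k <- r | P k) F k) s = \sum_(k <- r | P k) fE (F k) s.
Proof.
elim/big_rec2: _ => [|k y1 y2 _ <-]; first exact: fE_0.
have sc1 : forall W, sc 1 W = W by move=> W; apply/ffunP => x; rewrite scE mul1r.
by rewrite -{1}[F k]sc1 fE_ZD !sc1.
Qed.

Lemma fE_triv_in i (s : seq 'I_n) Y : i \in s -> triv i (fE Y s).
Proof.
elim: s => [//|k s IH]; rewrite in_cons => /orP [/eqP <-|iS] /=; first exact: triv_Ei.
case: (eqVneq i k) => [->|ik]; first exact: triv_Ei.
exact/triv_Ei_pres/IH.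
Qed.

Lemma fE_triv_pres i (s : seq 'I_n) Y : i \notin s -> triv i Y -> triv i (fE Y s).
Proof.
elim: s => [//|k s IH]; rewrite in_cons negb_or => /andP [ik iS] tY /=.
exact/triv_Ei_pres/IH.
Qed.

Lemma fE_triv_id (s : seq 'I_n) Y : (forall i, i \in s -> triv i Y) -> fE Y s = Y.
Proof.
elim: s => [//|k s IH] H /=; rewrite IH ?Ei_triv //; first by apply: H; rewrite mem_head.
by move=> i iS; apply: H; rewrite in_cons iS orbT.
Qed.

Lemma Ei_fE_comm k (s : seq 'I_n) Y : Ei rho k (fE Y s) = fE (Ei rho k Y) s.
Proof. by elim: s => [//|j s IH] /=; rewrite Ei_comm IH. Qed.

Lemma Ei_fE_filter x (s : seq 'I_n) Y :
  Ei rho x (fE Y s) = Ei rho x (fE Y (filter (predC1 x) s)).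
Proof.
elim: s => [//|y s IH] /=; case: (eqVneq y x) => [->|yx] /=.
  by rewrite Ei_idem IH.
by rewrite Ei_comm IH Ei_comm.
Qed.

Lemma Ei_fE_in x (s : seq 'I_n) Y : x \in s -> Ei rho x (fE Y s) = fE Y s.
Proof. by move=> xs; apply/Ei_triv/fE_triv_in. Qed.

Lemma fE_mem (s1 s2 : seq 'I_n) Y : s1 =i s2 -> fE Y s1 = fE Y s2.
Proof.
move: {2}(size s1) (leqnn (size s1)) => m; elim: m s1 s2 => [|m IH] [|x s1] s2 //= Hs Heq.
- case: s2 Heq => [//|y s2] /(_ y); by rewrite mem_head.
- case: s2 Heq => [//|y s2] /(_ y); by rewrite mem_head.
- case: s2 Heq => [/(_ x)|y s2 Heq]; first by rewrite mem_head.
  have xs2 : x \in y :: s2 by rewrite -Heq mem_head.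
  rewrite -(Ei_fE_in x (y :: s2) Y xs2).
  rewrite (Ei_fE_filter x s1) (Ei_fE_filter x (y :: s2)); congr (Ei rho x _).
  apply: IH; first by rewrite size_filter (leq_trans (count_size _ _)).
  move=> z; rewrite !mem_filter -Heq in_cons /=.
  by case: (eqVneq z x).
Qed.

Lemma EI_U1 k S Y : EI rho (k |: S) Y = Ei rho k (EI rho S Y).
Proof.
rewrite /EI -[Ei rho k _]/(fE Y (k :: enum S)); apply: fE_mem => z.
by rewrite mem_enum in_cons mem_enum in_setU1.
Qed.

Lemma EI_U1r k S Y : EI rho (k |: S) Y = EI rho S (Ei rho k Y).
Proof.
rewrite /EI -foldr_rcons; apply: fE_mem => z.
by rewrite mem_enum mem_rcons in_cons mem_enum in_setU1.
Qed.

Lemma EI0 Y : EI rho set0 Y = Y.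
Proof. by rewrite /EI enum_set0. Qed.


Lemma resJE (J : {set 'I_n}) (a : idx) j : resJ J a j = a (val j).
Proof. by rewrite ffunE. Qed.

Lemma resJ_upd (J : {set 'I_n}) (a : idx) (i : 'I_n) (s : 'I_(d i)) : i \notin J -> resJ J (upd a i s) = resJ J a.
Proof.
move=> iJ; apply/ffunP => j; rewrite !resJE upd_other //.
by apply: contraNneq iJ => <-; case: j.
Qed.

Lemma acts_triv (J : {set 'I_n}) (Z : op) : acts_only_on J Z -> forall i, i \notin J -> triv i Z.
Proof.
move=> [Y HY] i iJ.
exists (fun a b : idx => Y (resJ J a) (resJ J b) *
   (if [forall k, ((k \notin J) && (k != i)) ==> (a k == b k)] then 1 else 0)); split.
  move=> a b s t; rewrite !resJ_upd //; congr (_ * _); congr (if _ then _ else _).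
  apply: eq_forallb => k; case: (eqVneq k i) => [->|ki]; first by rewrite andbF.
  by rewrite !upd_other.
move=> a b; rewrite HY mulrCA; congr (_ * _).
have -> : [forall k, (k \notin J) ==> (a k == b k)] =
          (a i == b i) && [forall k, ((k \notin J) && (k != i)) ==> (a k == b k)].
  apply/forallP/andP => [H|[Hi /forallP H] k].
    split; first by have /implyP := H i; apply.
    by apply/forallP => k; apply/implyP => /andP [kJ _]; have /implyP := H k; apply.
  apply/implyP => kJ; case: (eqVneq k i) => [->//|ki].
  by have /implyP := H k; apply; rewrite kJ.
by case: (a i == b i); case: ifP; rewrite /= ?mulr1 ?mulr0.
Qed.

Definition updS (a0 : idx) (s : seq 'I_n) (a : idx) : idx :=
  @finfun _ (fun i => 'I_(d i)) (fun i => if i \in s then a0 i else a i).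

Lemma updSE (a0 : idx) (s : seq 'I_n) (a : idx) i :
  updS a0 s a i = if i \in s then a0 i else a i.
Proof. by rewrite ffunE. Qed.

Lemma updS_cons (a0 : idx) (k : 'I_n) (s : seq 'I_n) (a : idx) : updS a0 (k :: s) a = upd (updS a0 s a) k (a0 k).
Proof.
apply/ffunP => i; rewrite updSE in_cons.
case: (eqVneq i k) => [->|ik]; first by rewrite upd_same.
by rewrite upd_other // updSE.
Qed.

Lemma Z_updS (a0 : idx) (Z : op) (s : seq 'I_n) (a b : idx) : (forall k, k \in s -> triv k Z) ->
  (forall k, k \in s -> a k = b k) -> Z (a, b) = Z (updS a0 s a, updS a0 s b).
Proof.
elim: s => [|k s IH] Ht Hab.
  by congr (Z (_, _)); apply/ffunP => i; rewrite updSE.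
rewrite !updS_cons.
have [G [GU ZE]] := Ht k (mem_head _ _).
rewrite [RHS]ZE !upd_same eqxx GU mul1r IH.
- rewrite ZE (_ : updS a0 s a k = updS a0 s b k) ?eqxx ?mul1r //.
  by rewrite !updSE; case: ifP => // _; rewrite Hab // mem_head.
- by move=> i iS; apply: Ht; rewrite in_cons iS orbT.
- by move=> i iS; apply: Hab; rewrite in_cons iS orbT.
Qed.


Definition ext (J : {set 'I_n}) (a0 : idx) (al : idxJ d J) : idx :=
  @finfun _ (fun i => 'I_(d i)) (fun i =>
    match (i \in J) =P true with
    | ReflectT H => al (exist _ i H)
    | ReflectF _ => a0 i end).

Lemma ext_in (J : {set 'I_n}) a0 al i (H : i \in J) : ext J a0 al i = al (exist _ i H).
Proof. rewrite /ext ffunE; case: eqP => [H'|]; [by rewrite (bool_irrelevance H' H) | by rewrite H]. Qed.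

Lemma ext_out (J : {set 'I_n}) a0 al i : i \notin J -> ext J a0 al i = a0 i.
Proof. by move=> /negbTE iJ; rewrite /ext ffunE; case: eqP => [H|//]; rewrite H in iJ. Qed.

Lemma ext_resJ (J : {set 'I_n}) a0 a : ext J a0 (resJ J a) = updS a0 (enum (~: J)) a.
Proof.
apply/ffunP => i; rewrite updSE mem_enum in_setC.
case: (boolP (i \in J)) => [iJ|iJ] /=; last by rewrite ext_out.
by rewrite (ext_in _ _ _ _ iJ) resJE.
Qed.

Lemma triv_acts (J : {set 'I_n}) (Z : op) :
  (forall i, i \notin J -> triv i Z) -> acts_only_on J Z.
Proof.
move=> Ht.
exists (fun al be => if [pick x : idx] is Some a0 then Z (ext J a0 al, ext J a0 be) else 0).
move=> a b; case: pickP => [a0 _|/(_ a)//].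
case: ifP => [/forallP H|/negbT].
- rewrite mulr1 !ext_resJ; apply: Z_updS => k; rewrite mem_enum in_setC => kJ.
    exact: Ht.
  by apply/eqP; have /implyP := H k; apply.
- rewrite negb_forall => /existsP [i]; rewrite negb_imply => /andP [iJ neq].
  have [G [_ ZE]] := Ht i iJ; by rewrite ZE (negbTE neq) mul0r mulr0.
Qed.


Lemma pair_sum (V : zmodType) (P : pred {set 'I_n}) (f : {set 'I_n} -> V) (j : 'I_n) :
  (forall I : {set 'I_n}, j \notin I -> P (j |: I) = P I) ->
  (forall I : {set 'I_n}, j \notin I -> P I -> f (j |: I) = - f I) ->
  \sum_(I | P I) f I = 0.
Proof.
move=> HP Hf; rewrite (bigID (fun I : {set 'I_n} => j \in I)) /=.
rewrite (reindex_onto (fun I => j |: I) (fun I => I :\ j)) /=; last first.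
  by move=> I /andP [_ jI]; rewrite setD1K.
rewrite [X in X + _](eq_bigl (fun I => P I && (j \notin I))); last first.
  move=> I; case: (boolP (j \in I)) => jI /=.
    rewrite andbF; apply/negbTE; apply/negP => /andP [_ /eqP E].
    by move: jI; rewrite -E setD11.
  by rewrite HP // setU11 setU1K // eqxx !andbT.
rewrite -big_split /=; apply: big1 => I /andP [PI jI].
by rewrite Hf // addNr.
Qed.

Lemma sc_suml (I : Type) (r : seq I) (P : pred I) (c : I -> C) (Y : op) :
  \sum_(k <- r | P k) sc (c k) Y = sc (\sum_(k <- r | P k) c k) Y.
Proof. by apply/ffunP => x; rewrite sum_ffunE scE mulr_suml; apply: eq_bigr => k _; rewrite scE. Qed.

Lemma sc_sumr (I : Type) (r : seq I) (P : pred I) c (F : I -> op) :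
  sc c (\sum_(k <- r | P k) F k) = \sum_(k <- r | P k) sc c (F k).
Proof. by apply/ffunP => x; rewrite sum_ffunE scE sum_ffunE mulr_sumr; apply: eq_bigr => k _; rewrite scE. Qed.

Lemma mobius (J : {set 'I_n}) (c : {set 'I_n} -> {set 'I_n} -> C) (G : {set 'I_n} -> op) :
  (forall K : {set 'I_n}, K \subset J ->
     \sum_(I : {set 'I_n} | (K \subset I) && (I \subset J)) c I K = (K == J)%:R) ->
  \sum_(I : {set 'I_n} | I \subset J) \sum_(K : {set 'I_n} | K \subset I) sc (c I K) (G K) = G J.
Proof.
move=> Hc.
rewrite (exchange_big_dep (fun K : {set 'I_n} => K \subset J)) /=; last first.
  by move=> I K IJ KI; exact: subset_trans KI IJ.
rewrite (bigD1 J) //= [X in _ + X]big1 ?addr0.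
  rewrite sc_suml (eq_bigl (fun I : {set 'I_n} => (J \subset I) && (I \subset J))); last first.
    by move=> I; rewrite andbC.
  by rewrite Hc // eqxx; apply/ffunP => x; rewrite scE mul1r.
move=> K /andP [KJ nKJ]; rewrite sc_suml.
rewrite (eq_bigl (fun I : {set 'I_n} => (K \subset I) && (I \subset J))); last first.
  by move=> I; rewrite andbC.
by rewrite Hc // (negbTE nKJ); apply/ffunP => x; rewrite scE mul0r op0.
Qed.

Lemma sub_only (J : {set 'I_n}) (f : {set 'I_n} -> C) :
  \sum_(I : {set 'I_n} | (J \subset I) && (I \subset J)) f I = f J.
Proof.
rewrite (eq_bigl (pred1 J)); first exact: big_pred1_eq.
by move=> I; rewrite /= eqEsubset andbC.
Qed.

Lemma proper_ex (K J : {set 'I_n}) : K \subset J -> K != J ->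
  exists2 j, j \in J & j \notin K.
Proof.
move=> KJ nKJ; have : ~~ (J \subset K).
  by apply: contra nKJ => JK; rewrite eqEsubset KJ JK.
by move=> /subsetPn [j jJ jK]; exists j.
Qed.

Lemma coef1 (J K : {set 'I_n}) : K \subset J ->
  \sum_(I : {set 'I_n} | (K \subset I) && (I \subset J)) (-1) ^+ #|I :\: K| = (K == J)%:R :> C.
Proof.
move=> KJ; case: (eqVneq K J) => [->|nKJ].
  by rewrite sub_only setDv cards0 expr0.
have [j jJ jK] := proper_ex _ _ KJ nKJ.
apply: (pair_sum _ _ _ j) => I jI.
  apply/idP/idP => /andP [KI IJ]; apply/andP; split.
  - apply/subsetP => k kK; have := subsetP KI k kK; rewrite in_setU1.
    by case/orP => [/eqP kj|//]; rewrite kj (negbTE jK) in kK.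
  - exact: subset_trans (subsetU1 _ _) IJ.
  - exact: subset_trans KI (subsetU1 _ _).
  - by rewrite subUset sub1set jJ.
move=> _.
have -> : (j |: I) :\: K = j |: (I :\: K).
  apply/setP => k; rewrite !inE; case: (eqVneq k j) => [->|] //=.
  by rewrite jK.
by rewrite cardsU1 inE (negbTE jI) andbF /= exprS mulN1r.
Qed.

Lemma coef2 (J K : {set 'I_n}) : K \subset J ->
  \sum_(I : {set 'I_n} | (K \subset I) && (I \subset J)) (-1) ^+ #|J :\: I| = (K == J)%:R :> C.
Proof.
move=> KJ; case: (eqVneq K J) => [->|nKJ].
  by rewrite sub_only setDv cards0 expr0.
have [j jJ jK] := proper_ex _ _ KJ nKJ.
apply: (pair_sum _ _ _ j) => I jI.
  apply/idP/idP => /andP [KI IJ]; apply/andP; split.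
  - apply/subsetP => k kK; have := subsetP KI k kK; rewrite in_setU1.
    by case/orP => [/eqP kj|//]; rewrite kj (negbTE jK) in kK.
  - exact: subset_trans (subsetU1 _ _) IJ.
  - exact: subset_trans KI (subsetU1 _ _).
  - by rewrite subUset sub1set jJ.
move=> _.
rewrite [in RHS](cardsD1 j) inE jI jJ /= exprS mulN1r opprK.
have -> : J :\: (j |: I) = J :\: I :\ j; last by [].
apply/setP => k; rewrite !inE.
by case: (eqVneq k j).
Qed.


Lemma opN (Y : op) x : (- Y) x = - Y x.
Proof. by rewrite ffunE. Qed.

Definition Dec (J : {set 'I_n}) (X : op) : op :=
  \sum_(I : {set 'I_n} | I \subset J) sc ((-1) ^+ #|J :\: I|) (EI rho (~: I) X).

Lemma EI_ZD (S : {set 'I_n}) c (Y Z : op) : EI rho S (sc c Y + Z) = sc c (EI rho S Y) + EI rho S Z.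
Proof. exact: fE_ZD. Qed.

Lemma EI_sum (S : {set 'I_n}) (I : Type) (r : seq I) (P : pred I) (F : I -> op) :
  EI rho S (\sum_(k <- r | P k) F k) = \sum_(k <- r | P k) EI rho S (F k).
Proof. exact: fE_sum. Qed.

Lemma triv_sc i c (Y : op) : triv i Y -> triv i (sc c Y).
Proof. by move=> tY; rewrite -[sc c Y]addr0; apply: trivZD => //; apply: triv0. Qed.

Lemma EI_triv_in i (S : {set 'I_n}) (Y : op) : i \in S -> triv i (EI rho S Y).
Proof. by move=> iS; apply: fE_triv_in; rewrite mem_enum. Qed.

Lemma Dec_triv (J : {set 'I_n}) (X : op) i : i \notin J -> triv i (Dec J X).
Proof.
move=> iJ; apply: triv_sum => I IJ; apply/triv_sc/EI_triv_in.
by rewrite inE; apply: contra iJ; apply: (subsetP IJ).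
Qed.

Lemma Dec_acts (J : {set 'I_n}) (X : op) : acts_only_on J (Dec J X).
Proof. by apply: triv_acts => i iJ; apply: Dec_triv. Qed.

Lemma Ei_Dec (J : {set 'I_n}) (X : op) j : j \in J -> Ei rho j (Dec J X) = 0.
Proof.
move=> jJ; rewrite /Dec Ei_sum.
under eq_bigr => I _ do rewrite -[sc _ _]addr0 EiZD Ei0 addr0 -EI_U1.
apply: (pair_sum _ _ _ j) => I jI.
  apply/idP/idP => [H|IJ]; first exact: subset_trans (subsetU1 _ _) H.
  by rewrite subUset sub1set jJ.
move=> _.
have -> : j |: ~: (j |: I) = j |: ~: I.
  by apply/setP => k; rewrite !inE; case: (eqVneq k j).
rewrite [in RHS](cardsD1 j) inE jI jJ /= exprS mulN1r.
have -> : J :\: (j |: I) = J :\: I :\ j.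
  by apply/setP => k; rewrite !inE; case: (eqVneq k j).
by apply/ffunP => x; rewrite !scE opN scE mulNr opprK.
Qed.


Lemma Dec_partial (J : {set 'I_n}) (X : op) :
  \sum_(I : {set 'I_n} | I \subset J) Dec I X = EI rho (~: J) X.
Proof.
exact: (mobius J (fun I K => (-1) ^+ #|I :\: K|) (fun K => EI rho (~: K) X) (coef1 J)).
Qed.

Lemma Dec_sum (X : op) : X = \sum_(J : {set 'I_n}) Dec J X.
Proof.
have H := Dec_partial setT X; rewrite setCT EI0 in H; rewrite -{1}H.
by apply: eq_bigl => I; rewrite subsetT.
Qed.

Lemma Dec_lin (J : {set 'I_n}) (r : C) (X Y : op) :
  Dec J [ffun ab => r * X ab + Y ab] = [ffun ab => r * Dec J X ab + Dec J Y ab].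
Proof.
have -> : [ffun ab => r * X ab + Y ab] = sc r X + Y.
  by apply/ffunP => x; rewrite ffunE opD scE.
apply/ffunP => x; rewrite ffunE /Dec !sum_ffunE mulr_sumr -big_split /=.
apply: eq_bigr => I _; rewrite EI_ZD !scE opD scE.
by rewrite mulrDr mulrCA.
Qed.

Lemma obs_Ei i (Y : op) : observable Y -> observable (Ei rho i Y).
Proof.
move=> HY a b; rewrite !EiE eq_sym; case: ifP => _; last by rewrite rmorph0.
rewrite rmorph_sum; under [RHS]eq_bigr => s _ do rewrite rmorph_sum.
rewrite [RHS]exchange_big /=; apply: eq_bigr => s _; apply: eq_bigr => t _.
rewrite rmorphM.
by congr (_ * _); [exact: (proj1 (Hrho i) s t) | exact: HY].
Qed.

Lemma obs0 : observable (0 : op).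
Proof. by move=> a b; rewrite !op0 rmorph0. Qed.

Lemma obsZD (r : C) (Y Z : op) : r^* = r -> observable Y -> observable Z ->
  observable (sc r Y + Z).
Proof.
move=> Hr HY HZ a b; rewrite !opD !scE rmorphD rmorphM.
congr (_ + _); [congr (_ * _) |]; [exact: (esym Hr) | exact: HY | exact: HZ].
Qed.

Lemma obs_sum (I : Type) (rr : seq I) (P : pred I) (F : I -> op) :
  (forall k, P k -> observable (F k)) -> observable (\sum_(k <- rr | P k) F k).
Proof.
move=> H; elim/big_rec: _ => [|k y Pk ty]; first exact: obs0.
have -> : F k + y = sc 1 (F k) + y by congr (_ + _); apply/ffunP => x; rewrite scE mul1r.
by apply: obsZD => //; [rewrite rmorph1 | apply: H].
Qed.

Lemma obs_EI (S : {set 'I_n}) (Y : op) : observable Y -> observable (EI rho S Y).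
Proof. by rewrite /EI; elim: (enum S) => [//|k s IH] /= HY; apply/obs_Ei/IH. Qed.

Lemma obs_Dec (J : {set 'I_n}) (X : op) : observable X -> observable (Dec J X).
Proof.
move=> HX; apply: obs_sum => I _; rewrite -[sc _ _]addr0; apply: obsZD.
- by rewrite rmorphXn rmorphN1.
- exact: obs_EI.
- exact: obs0.
Qed.

Lemma Dec_uniq (X : op) (F : {set 'I_n} -> op) :
  ES_decomp rho X F -> forall J, F J = Dec J X.
Proof.
move=> [_ [HX [Hact HE]]].
have key : forall J : {set 'I_n}, EI rho (~: J) X = \sum_(K : {set 'I_n} | K \subset J) F K.
  move=> J; rewrite HX EI_sum (bigID (fun K : {set 'I_n} => K \subset J)) /=.
  rewrite [X in _ + X]big1 ?addr0.
    apply: eq_bigr => K KJ; apply: fE_triv_id => i; rewrite mem_enum inE => iJ.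
    apply: (acts_triv _ _ (Hact K)); apply: contra iJ; exact: (subsetP KJ i).
  move=> K /subsetPn [k kK kJ]; have kJ' : k \in ~: J by rewrite inE.
  by rewrite -(setD1K kJ') EI_U1r HE // /EI fE_0.
move=> J; rewrite /Dec; under eq_bigr => I _ do rewrite key sc_sumr.
symmetry; exact: (mobius J (fun I K => (-1) ^+ #|J :\: I|) F (coef2 J)).
Qed.


Lemma varrho_upd j (a b : idx) s t : varrho rho (upd a j s) (upd b j t) =
  rho j s t * \prod_(i < n | i != j) rho i (a i) (b i).
Proof.
rewrite /varrho (bigD1 j) //= !upd_same; congr (_ * _).
by apply: eq_bigr => i ij; rewrite !upd_other.
Qed.

Lemma W0 j (Z : op) (c b : idx) : Ei rho j Z = 0 -> c j = b j ->
  \sum_(u : 'I_(d j)) \sum_(a : idx) varrho rho a (upd b j u) * Z (upd c j u, a) = 0.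
Proof.
move=> EZ cb.
under eq_bigr => u _ do rewrite (sum_split _ j (b j)).
rewrite exchange_big /=; apply: big1 => a /eqP ajb.
transitivity ((\prod_(i < n | i != j) rho i (a i) (b i)) * Ei rho j Z (c, a)); last first.
  by rewrite EZ op0 mulr0.
rewrite EiE cb ajb eqxx mulr_sumr; apply: eq_bigr => u _; rewrite mulr_sumr.
by apply: eq_bigr => s _; rewrite varrho_upd -mulrA mulrCA.
Qed.

Lemma orth1 j (Y Z : op) : triv j Y -> Ei rho j Z = 0 -> inner rho Y Z = 0.
Proof.
move=> [G [GU YE]] EZ.
case: (pickP (fun _ : idx => true)) => [a0 _|H0]; last first.
  by rewrite /inner big1 // => a _; have := H0 a.
have E1 : inner rho Y Z = \sum_(c : idx) \sum_(b : idx)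
     (Y (c, b))^* * \sum_(a : idx) varrho rho a b * Z (c, a).
  rewrite /inner exchange_big /=.
  under eq_bigr => b _ do rewrite exchange_big /=.
  rewrite exchange_big /=; apply: eq_bigr => c _; apply: eq_bigr => b _.
  rewrite mulr_sumr; apply: eq_bigr => a _.
  by rewrite !mulrA (mulrC (varrho rho a b)).
rewrite E1 (sum_split _ j (a0 j)); apply: big1 => c /eqP ct0.
under eq_bigr => u _ do rewrite (sum_split _ j (a0 j)).
rewrite exchange_big /=; apply: big1 => b /eqP bt0.
transitivity ((G c b)^* * \sum_(u : 'I_(d j)) \sum_(a : idx)
    varrho rho a (upd b j u) * Z (upd c j u, a)); last first.
  by rewrite W0 ?mulr0 // ct0 bt0.
rewrite mulr_sumr; apply: eq_bigr => u _.
transitivity (\sum_(t : 'I_(d j)) (if u == t then (G c b)^* *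
   \sum_(a : idx) varrho rho a (upd b j t) * Z (upd c j u, a) else 0)); last first.
  exact: (sum_delta _ (fun t => (G c b)^* *
   \sum_(a : idx) varrho rho a (upd b j t) * Z (upd c j u, a)) u).
apply: eq_bigr => t _; rewrite YE !upd_same GU rmorphM rmorph_nat.
by case: eqP => [<-|_]; rewrite /= ?mul1r ?mul0r.
Qed.

Lemma varrho_conj (a b : idx) : (varrho rho a b)^* = varrho rho b a.
Proof.
rewrite /varrho rmorph_prod; apply: eq_bigr => i _.
exact/esym/(proj1 (Hrho i)).
Qed.

Lemma inner_conj (Y Z : op) : inner rho Y Z = (inner rho Z Y)^*.
Proof.
rewrite /inner rmorph_sum.
under [RHS]eq_bigr => a _ do (rewrite rmorph_sum; under eq_bigr => b _ do rewrite rmorph_sum).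
rewrite [RHS]exchange_big /=; apply: eq_bigr => a _; apply: eq_bigr => b _.
apply: eq_bigr => c _; rewrite !rmorphM [RHS]mulrAC; congr (_ * _ * _).
- exact: (esym (varrho_conj b a)).
- exact: (esym (conjCK _)).
Qed.

Lemma Dec_orth (I J : {set 'I_n}) (X : op) : I != J -> inner rho (Dec I X) (Dec J X) = 0.
Proof.
move=> nIJ; case: (boolP (J \subset I)) => [JI|/subsetPn [j jJ jI]].
  have nJI : J != I by rewrite eq_sym.
  have [i iI iJ] := proper_ex J I JI nJI.
  by rewrite inner_conj (orth1 i) ?rmorph0 //; [apply: Dec_triv | apply: Ei_Dec].
exact: (orth1 j) (Dec_triv _ _ _ jI) (Ei_Dec _ _ _ jJ).
Qed.

End QESProof.

Theorem theorem6p9 (C : numClosedFieldType) (n : nat) (d : 'I_n -> nat)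
    (rho : forall i : 'I_n, 'M[C]_(d i))
    (Hrho : forall i, is_state (rho i)) :
  exists Dec : {set 'I_n} -> op C d -> op C d,
    (* existence *)
    (forall X, observable X -> ES_decomp rho X (fun J => Dec J X)) /\
    (* uniqueness *)
    (forall X F, observable X -> ES_decomp rho X F -> forall J, F J = Dec J X) /\
    (* (3) linearity (over the reals, on observables) *)
    (forall J (r : C) (X Y : op C d), r \is Num.real -> observable X -> observable Y ->
       Dec J [ffun ab => r * X ab + Y ab] =
         [ffun ab => r * Dec J X ab + Dec J Y ab]) /\
    (* (3) partial sums *)
    (forall (J : {set 'I_n}) X, observable X ->
       \sum_(I : {set 'I_n} | I \subset J) Dec I X = EI rho (~: J) X) /\
    (* (4) orthogonality *)
    (forall (I J : {set 'I_n}) X, observable X -> I != J -> inner rho (Dec I X) (Dec J X) = 0).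
Proof.
exists (@Dec C n d rho); split; [|split; [|split; [|split]]].
- move=> X HX; split; first by move=> J; apply: obs_Dec.
  split; first exact: Dec_sum.
  split; first by move=> J; apply: Dec_acts.
  by move=> J j jJ; apply: Ei_Dec.
- by move=> X F _ HF J; apply: (Dec_uniq _ _ _ _ Hrho).
- by move=> J r X Y _ _ _; apply: Dec_lin.
- by move=> J X _; apply: Dec_partial.
- by move=> I J X _ nIJ; apply: (Dec_orth _ _ _ _ Hrho).
Qed.
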